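(* Let $d\ge 2$. There are a constant $C>0$ and $n_0(d)$ depending only on $d$ such that for all $n\ge n_0(d)$ the following holds. Let $\mathcal{F}$, $B_i$ be as in the context, let $J\subseteq[n]$ with $|J|\le n/4$, and let $K\ge 0$ be a real number with $|E(\mathcal{G}_J)|\ge\binom{n-|J|}{d}-Kn$. Let $\mathcal{S}\subseteq\binom{[n]\setminus J}{d-1}$ be the family of $(d-1)$-subsets of $[n]\setminus J$ that are contained in at most $100d+|J|$ edges of $\mathcal{G}_J$. Then $|\mathcal{S}|\le CK$.
   Context: Let $\mathcal{F}=\{F_1,\dots,F_m\}\subseteq\binom{[n]}{d+1}$ consist of distinct sets and have VC-dimension at most $d$ (no $(d+1)$-set $S$ is shattered, i.e. no $S$ such that every $A\subseteq S$ equals $F\cap S$ for some $F\in\mathcal{F}$). For $i\in[m]$, call $B\subsetneq F_i$ admissible for $F_i$ if $F\cap F_i\neq B$ for every $F\in\mathcal{F}$. For each $i$, $B_i$ is a fixed admissible set for $F_i$ of maximum cardinality among all admissible sets. For $J\subseteq[n]$, $\mathcal{G}_J$ is the $d$-uniform hypergraph on vertex set $[n]\setminus J$ with edge set $E(\mathcal{G}_J):=\{F_k\setminus J: k\in[m],\ |F_k\cap J|=1\}$. *)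

(* Defs.v *)
From mathcomp Require Import all_boot.
From Stdlib Require Import Reals.
Set Implicit Arguments. Unset Strict Implicit. Unset Printing Implicit Defensive.

(* Ground set [n] is 'I_n. A family F = {F_1,...,F_m} of distinct sets is a
   finite set of subsets of 'I_n. *)

Definition shattered (n : nat) (Fam : {set {set 'I_n}}) (S : {set 'I_n}) : Prop :=
  forall A : {set 'I_n}, A \subset S -> exists2 F, F \in Fam & F :&: S = A.

Definition VCdim_le (n : nat) (Fam : {set {set 'I_n}}) (d : nat) : Prop :=
  forall S : {set 'I_n}, #|S| = d.+1 -> ~ shattered Fam S.

Definition uniform (n : nat) (Fam : {set {set 'I_n}}) (k : nat) : Prop :=
  forall F, F \in Fam -> #|F| = k.

Definition edgesG (n : nat) (Fam : {set {set 'I_n}}) (J : {set 'I_n}) : {set {set 'I_n}} :=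
  [set F :\: J | F in Fam & #|F :&: J| == 1].

Definition lowdeg_sets (n : nat) (Fam : {set {set 'I_n}}) (J : {set 'I_n}) (d : nat)
  : {set {set 'I_n}} :=
  [set T : {set 'I_n} | [&& T \subset ~: J, #|T| == d.-1 &
      #|[set e in edgesG Fam J | T \subset e]| <= 100 * d + #|J| ]].

(* Main.v *)
Require Import Defs.
From mathcomp Require Import all_boot.
From Stdlib Require Import Reals.
From mathcomp Require Import zify.
From Stdlib Require Import Lra.

Lemma card_sum (X : finType) (A : {set X}) (P : pred X) :
  #|[set e in A | P e]| = \sum_(e in A) (P e : nat).
Proof.
rewrite -sum1_card big_mkcond /= [RHS]big_mkcond; apply: eq_bigr => e _.
by rewrite !inE; case: (e \in A); case: (P e).
Qed.

Lemma key n (Fam : {set {set 'I_n}}) (J : {set 'I_n}) d : 2 <= d -> uniform Fam d.+1 ->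
  #|lowdeg_sets Fam J d| * ((n - #|J|) - d.-1 - (100*d + #|J|))
    <= d * ('C(n - #|J|, d) - #|edgesG Fam J|).
Proof.
move=> d2 unif.
set U := ~: J.
have HN : #|U| = n - #|J| by rewrite /U; have := cardsC J; rewrite card_ord; lia.
set D := [set A : {set 'I_n} | A \subset U & #|A| == d].
have HD : #|D| = 'C(n - #|J|, d) by rewrite /D cards_draws HN.
set E := edgesG Fam J.
have HE : E \subset D.
  apply/subsetP => e /imsetP [F]; rewrite inE => /andP [FF /eqP FJ] ->.
  rewrite inE; apply/andP; split.
    by apply/subsetP => x; rewrite !inE => /andP [].
  apply/eqP; have := cardsID J F; rewrite (unif F FF) FJ; lia.
set M := D :\: E.
have HM : #|M| = #|D| - #|E| by rewrite cardsD (setIidPr HE).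
set S := lowdeg_sets Fam J d.
have st1 : \sum_(T in S) #|[set e in M | T \subset e]| <= #|M| * d.
  under eq_bigr => T _ do rewrite card_sum.
  rewrite exchange_big /= -sum_nat_const; apply: leq_sum => e eM.
  rewrite -card_sum.
  have ed : #|e| = d.
    by move: eM; rewrite !inE => /andP [_ /andP [_ /eqP]].
  apply: (@leq_trans #|[set T : {set 'I_n} | T \subset e & #|T| == d.-1]|).
    apply: subset_leq_card; apply/subsetP => T; rewrite !inE => /andP [TS Te].
    by rewrite Te; case/and3P: TS.
  rewrite cards_draws ed -subn1 bin_sub ?bin1 //; lia.
have st2 : forall T, T \in S ->
    (n - #|J|) - d.-1 - (100*d + #|J|) <= #|[set e in M | T \subset e]|.
  move=> T; rewrite inE => /and3P [TU /eqP Tc Tdeg].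
  set X := [set x |: T | x in U :\: T].
  have HX : #|X| = #|U| - d.-1.
    rewrite card_in_imset; first by rewrite cardsD (setIidPr TU) Tc.
    move=> x y; rewrite !inE => /andP [xT _] /andP [yT _] Exy.
    have : x \in y |: T by rewrite -Exy setU11.
    by rewrite in_setU1 (negbTE xT) orbF => /eqP.
  set Et := [set e in E | T \subset e].
  have sub : X :\: Et \subset [set e in M | T \subset e].
    apply/subsetP => e; rewrite !inE => /andP [eEt /imsetP [x]].
    rewrite !inE => /andP [xT xU] Ee; subst e.
    have Tx : T \subset x |: T by apply: subsetU1.
    move: eEt; rewrite Tx andbT => ->/=.
    rewrite cardsU1 xT Tc subUset sub1set !inE xU TU /=.
    apply/eqP; lia.
  have := subset_leq_card sub.
  rewrite cardsD.
  have : #|X :&: Et| <= #|Et| by apply: subset_leq_card; apply: subsetIr.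
  move: Tdeg; rewrite -/E -/Et => Tdeg.
  rewrite HX HN; lia.
have : \sum_(T in S) ((n - #|J|) - d.-1 - (100*d + #|J|))
        <= \sum_(T in S) #|[set e in M | T \subset e]| by apply: leq_sum.
rewrite sum_nat_const.
move: st1; rewrite HM HD; lia.
Qed.

Theorem fact3p7 :
  forall d : nat, 2 <= d ->
  exists C : R, (0 < C)%R /\
  exists n0 : nat, forall n : nat, n0 <= n ->
  forall (Fam : {set {set 'I_n}}),
    uniform Fam d.+1 -> VCdim_le Fam d ->
  forall (J : {set 'I_n}), 4 * #|J| <= n ->
  forall K : R, (0 <= K)%R ->
    (INR #|edgesG Fam J| >= INR 'C(n - #|J|, d) - K * INR n)%R ->
    (INR #|lowdeg_sets Fam J d| <= C * K)%R.
Proof.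
move=> d d2; exists (INR (4 * d)); split.
  apply: lt_0_INR; apply/ltP; lia.
exists (404 * d) => n nge Fam unif _ J HJ K K0 HK.
have hk := @key n Fam J d d2 unif.
set L := #|lowdeg_sets Fam J d| in hk *.
set e := #|edgesG Fam J| in hk HK *.
set Cb := 'C(n - #|J|, d) in hk HK *.
have h1 : L * n <= 4 * d * (Cb - e).
  move: hk; set lb := (n - #|J| - d.-1 - (100 * d + #|J|)) => hk.
  have h : n <= 4 * lb by rewrite /lb; lia.
  apply: (leq_trans (leq_mul (leqnn L) h)).
  rewrite mulnCA -mulnA leq_mul2l hk orbT //.
have h2 : (INR (Cb - e) <= K * INR n)%R.
  case: (leqP e Cb) => h.
    rewrite minus_INR; [lra | by apply/leP].
  have -> : Cb - e = 0 by lia.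
  simpl; have := pos_INR n; nra.
have h3 : (INR L * INR n <= INR (4 * d) * (K * INR n))%R.
  rewrite -mult_INR.
  apply: Rle_trans; first by apply: le_INR; apply/leP; exact h1.
  rewrite mult_INR; apply: Rmult_le_compat_l; [apply: pos_INR | exact h2].
have npos : (0 < INR n)%R by apply: lt_0_INR; apply/ltP; lia.
apply: (Rmult_le_reg_r (INR n)) => //; lra.
Qed.
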